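(* In the setting described in the context, for every $a>0$ the measure $\widetilde{\mu}=h^a_\sharp\mu$ is invariant and satisfies $P_\sharp\widetilde{\mu}_A=P_\sharp\mu_A$; that is, all measures $h^a_\sharp\mu$, $a>0$, yield the same normalized measure $\nu=P_\sharp\mu_A$.
   Context: Let $(\mathcal{X},\Sigma)$ be a measurable space, $\Phi^t$ ($t\in\mathbb{R}$) a flow on $\mathcal{X}$ (bijective measurable maps with $\Phi^{t_1}\circ\Phi^{t_2}=\Phi^{t_1+t_2}$, jointly measurable in $(x,t)$), $f_\sharp$ push-forward, and $\mu$ a probability measure with $\Phi^t_\sharp\mu=\mu$ for all $t$. Let $h^a$, $a>0$, be bijective measurable maps of $\mathcal{X}$ with $h^{a_1}\circ h^{a_2}=h^{a_1a_2}$ and $\Phi^t\circ h^a=h^a\circ\Phi^{t/a}$. A set $\mathcal{Y}\subset\mathcal{X}$ is a representative set if for every $x$ there is a unique $a=A(x)>0$ with $h^a(x)\in\mathcal{Y}$, with $A:\mathcal{X}\to(0,\infty)$ measurable and $\int A\,d\mu<\infty$; the projector is $P(x)=h^{A(x)}(x)$. For a measure $\rho$ and positive measurable $B$ with $0<\int B\,d\rho<\infty$, $\rho_B$ is the probability measure with $d\rho_B/d\rho=B/\int B\,d\rho$. *)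

(* Defs.v *)
From HB Require Import structures.
From mathcomp Require Import all_boot all_order all_algebra.
From mathcomp Require Import all_classical all_reals all_analysis.
Set Implicit Arguments. Unset Strict Implicit. Unset Printing Implicit Defensive.
Import Order.TTheory GRing.Theory Num.Theory.
Local Open Scope classical_set_scope.
Local Open Scope ring_scope.

(* Push-forward measure f_# m, for a measurable map f (the proof of
   measurability is an argument so that the measure structure is inferred). *)
Section pushm.
Context d d' (T1 : measurableType d) (T2 : measurableType d') (R : realType).
Variables (m : {measure set T1 -> \bar R}) (f : T1 -> T2).
Variable (mf : measurable_fun [set: T1] f).
Definition pushm : {measure set T2 -> \bar R} :=
  measure_function_pushforward__canonical__measure_function_Measure m mf.
End pushm.

(* rho_B : the probability measure with density B / \int B d rho w.r.t. rho *)
Definition normw d (T : measurableType d) (R : realType)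
  (rho : {measure set T -> \bar R}) (B : T -> R) : set T -> \bar R :=
  fun S => ((\int[rho]_(x in S) (B x)%:E) *
            ((fine (\int[rho]_x (B x)%:E))^-1)%:E)%E.

Definition projector (T : Type) (R : Type) (h : R -> T -> T) (A : T -> R)
  (x : T) : T := h (A x) x.

(* Main.v *)
Require Import Defs.
From HB Require Import structures.
From mathcomp Require Import all_boot all_order all_algebra.
From mathcomp Require Import all_classical all_reals all_analysis measurable_realfun.
Import Order.TTheory GRing.Theory Num.Theory.
Local Open Scope classical_set_scope.
Local Open Scope ring_scope.

Lemma int_pos_gt0 d (X : measurableType d) (R : realType) (mu : probability X R)
  (A : X -> R) : (forall x, 0 < A x) -> measurable_fun [set: X] A ->
  (0 < \int[mu]_x (A x)%:E)%E.
Proof.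
move=> A0 mA; have A0' x : 0 <= A x by exact: ltW.
have mAE : measurable_fun [set: X] (EFin \o A) by exact/measurable_EFinP.
rewrite lt_neqAle integral_ge0 ?andbT; last by move=> x _; rewrite lee_fin ltW.
apply/negP => /eqP I0.
have N k : mu.-negligible (A @^-1` `[k.+1%:R^-1, +oo[).
  exists ([set: X] `&` A @^-1` `[k.+1%:R^-1, +oo[); split => //.
  - by apply: mA => //; exact: measurable_itv.
  - apply/eqP; rewrite eq_le measure_ge0 andbT.
    have := @le_integral_comp_abse _ _ _ mu setT measurableT (EFin \o A)
      (k.+1%:R^-1) id (@measurable_id _ _ _) (fun r r0 => r0) (fun x y _ _ h => h) mAE.
    rewrite invr_gt0 ltr0n => /(_ isT).
    rewrite (eq_integral (fun x => (A x)%:E)); last first.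
      by move=> x _ /=; rewrite (ger0_norm (A0' x)).
    rewrite -I0.
    have -> : [set: X] `&` [set x | ((k.+1%:R^-1)%:E <= `|(EFin \o A) x|)%E] =
              [set: X] `&` A @^-1` `[k.+1%:R^-1, +oo[.
      apply/seteqP; split => x /= [_ h]; split => //.
        move: h; rewrite /= lee_fin (ger0_norm (A0' x)) => h.
        by rewrite /= in_itv /= andbT.
      move: h; rewrite /= in_itv /= andbT => h.
      by rewrite (ger0_norm (A0' x)) lee_fin.
    move=> H.
    rewrite -(@lee_pmul2l _ (k.+1%:R^-1)%:E) ?lte_fin ?invr_gt0 ?ltr0n //.
    by rewrite mule0.
have := negligible_bigcup N => -[B [mB B0 sB]].
have : (mu setT <= mu B)%E.
  apply: le_measure; rewrite ?inE //.
  move=> x _; apply: sB.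
  have [k kA] : exists k : nat, k.+1%:R^-1 <= A x.
    exists (Num.truncn (A x)^-1); apply: ltW.
    rewrite invf_plt ?posrE ?ltr0n ?A0 //.
    exact: truncnS_gt.
  by exists k => //=; rewrite in_itv /= andbT.
by rewrite B0 probability_setT lee_fin ler10.
Qed.


Theorem proposition2 (d : measure_display) (X : measurableType d) (R : realType)
  (mu : probability X R) (Phi : R -> X -> X) (h : R -> X -> X)
  (Y : set X) (A : X -> R)
  (Phi_bij : forall t, bijective (Phi t))
  (Phi_meas : forall t, measurable_fun [set: X] (Phi t))
  (Phi_joint : measurable_fun [set: X * R] (fun p : X * R => Phi p.2 p.1))
  (Phi_add : forall t1 t2, Phi t1 \o Phi t2 = Phi (t1 + t2))
  (mu_inv : forall t S, measurable S -> mu (Phi t @^-1` S) = mu S)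
  (h_bij : forall a, 0 < a -> bijective (h a))
  (h_meas : forall a, 0 < a -> measurable_fun [set: X] (h a))
  (h_mul : forall a1 a2, 0 < a1 -> 0 < a2 -> h a1 \o h a2 = h (a1 * a2))
  (h_Phi : forall t a, 0 < a -> Phi t \o h a = h a \o Phi (t / a))
  (A_pos : forall x, 0 < A x)
  (A_Y : forall x, Y (h (A x) x))
  (A_uniq : forall x a, 0 < a -> Y (h a x) -> a = A x)
  (A_meas : measurable_fun [set: X] A)
  (A_int : (\int[mu]_x (A x)%:E < +oo)%E)
  (P_meas : measurable_fun [set: X] (projector h A)) :
  forall (a : R) (a_pos : 0 < a),
    let mut := pushm mu (h_meas a a_pos) in
    (forall t S, measurable S -> mut (Phi t @^-1` S) = mut S) /\
    (0 < \int[mut]_x (A x)%:E < +oo)%E /\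
    (forall S, measurable S ->
       pushforward (normw mut A) (projector h A) S =
       pushforward (normw mu A) (projector h A) S).
Proof.
Proof.
move=> a a0 mut.
have hA x : A (h a x) = A x / a.
  have p := A_pos (h a x).
  have := A_Y (h a x).
  have -> : h (A (h a x)) (h a x) = h (A (h a x) * a) x.
    by rewrite -(h_mul _ _ p a0).
  move/(A_uniq x _ (mulr_gt0 p a0)) => <-.
  by rewrite mulfK // gt_eqF.
have hP x : projector h A (h a x) = projector h A x.
  rewrite /projector hA.
  have -> : h (A x / a) (h a x) = h (A x / a * a) x.
    by rewrite -(h_mul _ _ _ a0) // divr_gt0.
  by rewrite divfK // gt_eqF.
have mhS S : measurable S -> measurable (h a @^-1` S).
  by move=> mS; rewrite -(setTI (_ @^-1` _)); exact: (h_meas a a0 measurableT S mS).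
have mAE : measurable_fun [set: X] (EFin \o A) by exact/measurable_EFinP.
have L D : measurable D -> (\int[mut]_(x in D) (A x)%:E =
    (a^-1)%:E * \int[mu]_(x in h a @^-1` D) (A x)%:E)%E.
  move=> mD.
  rewrite (@ge0_integral_pushforward _ _ _ _ R (h a) (h_meas a a0) mu D (EFin \o A) mD).
  - rewrite -ge0_integralZl_EFin //.
    all: try (by move=> x _; rewrite /= lee_fin ltW).
    all: try (exact: mhS).
    all: try (exact: measurable_funS mAE).
    all: try (by rewrite invr_ge0 ltW).
    apply: eq_integral => x _ /=; rewrite hA -EFinM mulrC //.
have Ipos := @int_pos_gt0 _ _ _ mu A A_pos A_meas.
have total := L setT measurableT.
rewrite preimage_setT in total.
have Ifin : (\int[mu]_x (A x)%:E)%E \is a fin_num.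
  by rewrite ge0_fin_numE ?A_int // ltW.
set I := (\int[mu]_x (A x)%:E)%E in Ipos Ifin total A_int *.
have Ir : I = (fine I)%:E by rewrite fineK.
have r0 : 0 < fine I by apply: fine_gt0; rewrite Ipos A_int.
split.
  move=> t S mS.
  rewrite /mut /= /pushforward.
  have -> : h a @^-1` (Phi t @^-1` S) = Phi (t/a) @^-1` (h a @^-1` S).
    apply/seteqP; split => x /=;
    by have := congr1 (fun f => f x) (h_Phi t a a0) => /= ->.
  exact: mu_inv (mhS _ mS).
split.
  by rewrite total Ir -EFinM lte_fin ltry andbT mulr_gt0 // invr_gt0.
move=> S mS.
have mPS : measurable (projector h A @^-1` S).
  rewrite -(setTI (_ @^-1` _)); exact: (P_meas measurableT S mS).
rewrite /pushforward /normw (L _ mPS).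
have -> : h a @^-1` (projector h A @^-1` S) = projector h A @^-1` S.
  by apply/seteqP; split => x /=; rewrite hP.
rewrite total Ir -EFinM /=.
rewrite [X in (X * _)%E]muleC -muleA -EFinM.
by rewrite invfM invrK mulrA mulVf ?gt_eqF // mul1r.
Qed.
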